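(* Let $\mu$ be a probability measure on $\mathbb{R}^d$, $\nu=\sum_{i=1}^M w_i\delta_{y_i}$ with $w_i>0$, $\sum_iw_i=1$, $w_{\min}=\min_iw_i$, and $c:\mathbb{R}^d\times\mathbb{R}^d\to[0,\infty)$ a cost. Assume the semi-dual objective $H$ admits a minimizer, and let $K$ be a compact set with $\mu(K)\ge1-\frac12 w_{\min}$, with associated projection set $\mathcal C$, and let $\mathbf g^*\in\mathcal C$ be a minimizer of $H$. Run PSGD with step sizes $\gamma_k=\gamma_1/k^{b}$, where $b=1/2$ and $\gamma_1=\mathrm{Diam}(\mathcal C)/(2\sqrt2)$. Then for every $n\ge1$, $$\mathbb{E}\big[H(\bar{\mathbf g}_n)-H(\mathbf g^* )\big]\le \frac{4\sqrt2\,\mathrm{Diam}(\mathcal C)}{\sqrt n}.$$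
   Context: For $\mathbf g\in\mathbb{R}^M$: $\mathbf g^c(x)=\min_i\{c(x,y_i)-g_i\}$; Laguerre cells $\mathbb L_j(\mathbf g)=\{x:\mathbf g^c(x)=c(x,y_j)-g_j\}$; $h(\mathbf g,x)=-\mathbf g^c(x)-\sum_jw_jg_j$; $H(\mathbf g)=\mathbb{E}_{X\sim\mu}[h(\mathbf g,X)]$. Projection set: $\|c\|_{K,\infty}=\sup_{x\in K,j}|c(x,y_j)|$, $\mathcal C=\{\mathbf g\in\mathbb{R}^M:|g_j|\le\|c\|_{K,\infty}\ \forall j\}$, $\mathrm{Proj}_{\mathcal C}$ the Euclidean projection onto $\mathcal C$, and $\mathrm{Diam}(\mathcal C)$ its Euclidean diameter. PSGD: given $\gamma_1>0$, $b$, i.i.d. samples $X_1,X_2,\dots\sim\mu$, start from $\mathbf g_0\in\mathcal C$ and for $k\ge1$ set $\mathbf g_k=\mathrm{Proj}_{\mathcal C}\big(\mathbf g_{k-1}-\gamma_k\,\partial_{\mathbf g}h(\mathbf g_{k-1},X_k)\big)$, $\gamma_k=\gamma_1k^{-b}$, where $\partial_{\mathbf g}h(\mathbf g,x)_j=\mathbf 1_{x\in\mathbb L_j(\mathbf g)}-w_j$ (a point lying in several cells is assigned to one of them by a fixed rule); the averaged iterate is $\bar{\mathbf g}_n=\frac1{n+1}\sum_{k=0}^n\mathbf g_k$. *)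

(* Defs.v *)
From HB Require Import structures.
From mathcomp Require Import all_boot all_order all_algebra.
From mathcomp Require Import all_classical all_reals all_analysis.
Set Implicit Arguments. Unset Strict Implicit. Unset Printing Implicit Defensive.
Import Order.TTheory GRing.Theory Num.Theory.
Import numFieldNormedType.Exports.
Local Open Scope classical_set_scope.
Local Open Scope ring_scope.

(* Points of R^d are represented as d.-tuple R, equipped with the product
   (= Borel) sigma-algebra from MathComp-Analysis.  For topological notions
   (compactness) we transport to row vectors 'rV[R]_d. *)
Definition tup2rv (R : realType) (d : nat) (t : d.-tuple R) : 'rV[R]_d :=
  \row_i tnth t i.

Section OT.
Variables (R : realType) (d M : nat).
Notation T := (d.-tuple R).
Variables (c : T -> T -> R) (y : 'I_M -> T) (w : 'I_M -> R).

(* Laguerre cell index of x for the potential g, ties broken by the fixed rule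
   "smallest index" (pick returns the first index in the enumeration). *)
Definition lag (g : 'I_M -> R) (x : T) : option 'I_M :=
  [pick j | [forall k, c x (y j) - g j <= c x (y k) - g k]].

Definition ctrans (g : 'I_M -> R) (x : T) : R :=
  if lag g x is Some j then c x (y j) - g j else 0.

Definition hfun (g : 'I_M -> R) (x : T) : R :=
  - ctrans g x - \sum_j w j * g j.

Definition subgrad (g : 'I_M -> R) (x : T) : 'I_M -> R :=
  fun j => (if lag g x == Some j then 1 else 0) - w j.

Definition Hsd (mu : probability T R) (g : 'I_M -> R) : \bar R :=
  (\int[mu]_x (hfun g x)%:E)%E.

Definition cnormK (K : set T) : R :=
  sup [set r | exists x j, K x /\ r = `|c x (y j)|].

Definition Cset (K : set T) : set ('I_M -> R) :=
  [set g | forall j, `|g j| <= cnormK K].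
End OT.

Definition enorm (R : realType) (M : nat) (v : 'I_M -> R) : R :=
  Num.sqrt (\sum_j v j ^+ 2).

Definition Diam (R : realType) (M : nat) (C : set ('I_M -> R)) : R :=
  sup [set r | exists u v, C u /\ C v /\ r = enorm (fun j => u j - v j)].

Definition is_eucl_proj (R : realType) (M : nat) (C : set ('I_M -> R))
    (proj : ('I_M -> R) -> ('I_M -> R)) : Prop :=
  forall z, C (proj z) /\
    forall u, C u -> enorm (fun j => z j - proj z j) <= enorm (fun j => z j - u j).

Definition wmin (R : realType) (M : nat) (w : 'I_M -> R) : R := inf (range w).

Definition iid_law (R : realType) (dO dT : measure_display)
    (O : measurableType dO) (T : measurableType dT)
    (P : probability O R) (Y : nat -> O -> T) (mu : probability T R) : Prop :=
  [/\ (forall k, measurable_fun setT (Y k)),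
      (forall k (A : set T), measurable A -> P (Y k @^-1` A) = mu A) &
      (forall (s : seq nat) (B : nat -> set T), uniq s ->
         (forall i, measurable (B i)) ->
         P (\bigcap_(i in [set i | i \in s]) (Y i @^-1` B i)) =
         (\prod_(i <- s) P (Y i @^-1` B i))%E)].

Definition gammak (R : realType) (gamma1 b : R) (k : nat) : R :=
  gamma1 * (k%:R `^ (- b)).

(* PSGD iterates: X k is the k-th sample (k >= 1; X 0 is unused) *)
Fixpoint psgd (R : realType) (d M : nat) (c : d.-tuple R -> d.-tuple R -> R)
    (y : 'I_M -> d.-tuple R) (w : 'I_M -> R)
    (proj : ('I_M -> R) -> ('I_M -> R)) (gamma1 b : R) (g0 : 'I_M -> R)
    (O : Type) (X : nat -> O -> d.-tuple R) (k : nat) (om : O) : 'I_M -> R :=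
  match k with
  | 0 => g0
  | k'.+1 =>
      let gp := psgd c y w proj gamma1 b g0 X k' om in
      proj (fun j => gp j - gammak gamma1 b k'.+1 * subgrad c y w gp (X k'.+1 om) j)
  end.

Definition gbar (R : realType) (d M : nat) (c : d.-tuple R -> d.-tuple R -> R)
    (y : 'I_M -> d.-tuple R) (w : 'I_M -> R)
    (proj : ('I_M -> R) -> ('I_M -> R)) (gamma1 b : R) (g0 : 'I_M -> R)
    (O : Type) (X : nat -> O -> d.-tuple R) (n : nat) (om : O) : 'I_M -> R :=
  fun j => (n.+1%:R)^-1 * \sum_(k < n.+1) psgd c y w proj gamma1 b g0 X k om j.

(* Main.v *)
Require Import Defs.
From HB Require Import structures.
From mathcomp Require Import all_boot all_order all_algebra.
From mathcomp Require Import all_classical all_reals all_analysis.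
From mathcomp Require Import ring lra.
Import Order.TTheory GRing.Theory Num.Theory.
Import numFieldNormedType.Exports.
Local Open Scope classical_set_scope.
Local Open Scope ring_scope.

Set Implicit Arguments. Unset Strict Implicit. Unset Printing Implicit Defensive.

Section OTfacts.
Variables (R : realType) (d M : nat).
Local Notation T := (d.-tuple R).
Variables (c : T -> T -> R) (y : 'I_M -> T) (w : 'I_M -> R) (j0 : 'I_M).

Lemma lag_some g x : exists j, lag c y g x = Some j.
Proof.
rewrite /lag; case: pickP => [j _|H]; first by exists j.
exfalso.
case: (@arg_minP _ _ _ j0 xpredT (fun j => c x (y j) - g j) isT) => j _ Hj.
move: (H j); move/negP; apply; apply/forallP => k; exact: Hj.
Qed.

Lemma lag_min g x j : lag c y g x = Some j ->
  forall k, c x (y j) - g j <= c x (y k) - g k.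
Proof.
by rewrite /lag; case: pickP => // j' /forallP H [<-] k; exact: H k.
Qed.

Definition ix g x := odflt j0 (lag c y g x).

Lemma lag_ix g x : lag c y g x = Some (ix g x).
Proof. by case: (lag_some g x) => j; rewrite /ix => ->. Qed.

Lemma ctrans_ix g x : ctrans c y g x = c x (y (ix g x)) - g (ix g x).
Proof. by rewrite /ctrans lag_ix. Qed.

Lemma ctrans_le g x k : ctrans c y g x <= c x (y k) - g k.
Proof. by rewrite ctrans_ix; apply: lag_min; exact: lag_ix. Qed.

Lemma sum_delta (j : 'I_M) (a : 'I_M -> R) :
  \sum_i (j == i)%:R * a i = a j.
Proof.
rewrite (bigD1 j) //= eqxx mul1r big1 ?addr0 // => i ij.
by rewrite eq_sym (negbTE ij) mul0r.
Qed.

Lemma hfun_sub g g' x :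
  hfun c y w g x + \sum_j (((ix g x == j)%:R - w j) * (g' j - g j))
    <= hfun c y w g' x.
Proof.
rewrite (eq_bigr (fun j => (ix g x == j)%:R * (g' j - g j) - w j * (g' j - g j)));
  last by move=> j _; rewrite mulrBl.
rewrite sumrB sum_delta.
rewrite (eq_bigr (fun j => w j * g' j - w j * g j)); last by move=> j _; rewrite mulrBr.
rewrite sumrB /hfun ctrans_ix.
have := ctrans_le g' x (ix g x).
lra.
Qed.

Definition Aset g j := [set x | lag c y g x = Some j].

Hypothesis hcm : forall j, measurable_fun setT (fun x => c x (y j)).

Lemma meas_le (a b : T -> R) : measurable_fun setT a -> measurable_fun setT b ->
  measurable [set x | a x <= b x].
Proof.
move=> ma mb.
have mh : measurable_fun setT (fun x => b x - a x) by exact: measurable_realfun.measurable_funB.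
have := mh measurableT _ (measurable_itv `[0, +oo[).
rewrite setTI.
congr measurable; apply/seteqP; split => x /=; rewrite in_itv /= andbT subr_ge0 //.
Qed.

Definition Pset g i := [set x | [forall k, c x (y i) - g i <= c x (y k) - g k]].

Lemma Pset_meas g i : measurable (Pset g i).
Proof.
have -> : Pset g i = \bigcap_(k in [set: 'I_M]) [set x | c x (y i) - g i <= c x (y k) - g k].
  apply/seteqP; split => x /=.
    by move=> /forallP H k _; exact: H.
  by move=> H; apply/forallP => k; exact: H.
apply: fin_bigcap_measurable; first exact: finite_finset.
move=> k _; apply: meas_le.
  by apply: measurable_realfun.measurable_funB => //; exact: measurable_cst.
by apply: measurable_realfun.measurable_funB => //; exact: measurable_cst.
Qed.

Lemma Aset_meas g j : measurable (Aset g j).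
Proof.
pose F (bb : {ffun 'I_M -> bool}) := [pick i | bb i].
have -> : Aset g j = \bigcup_(bb in [set bb | F bb = Some j])
   \bigcap_(i in [set: 'I_M]) (if bb i then Pset g i else ~` Pset g i).
  apply/seteqP; split => x /=.
    move=> Hx; exists [ffun i => [forall k, c x (y i) - g i <= c x (y k) - g k]].
      rewrite /= /F -Hx /lag; apply: eq_pick => i; by rewrite ffunE.
    move=> i _; rewrite ffunE; case: ifP => //= /negbT /negP; done.
  move=> [bb /= Fb Hb]; rewrite /lag; apply: etrans Fb; apply: eq_pick => i /=.
  move: (Hb i I); case: (bb i) => //=.
  by move/negP/negbTE.
apply: fin_bigcup_measurable; first exact: finite_finset.
move=> bb _; apply: fin_bigcap_measurable; first exact: finite_finset.
move=> i _; case: (bb i); first exact: Pset_meas.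
apply: measurableC; exact: Pset_meas.
Qed.

End OTfacts.

Section Integ.
Variables (R : realType) (d M : nat).
Local Notation T := (d.-tuple R).
Variables (mu : probability T R).
Variables (c : T -> T -> R) (y : 'I_M -> T) (w : 'I_M -> R) (j0 : 'I_M).
Hypothesis hcm : forall j, measurable_fun setT (fun x => c x (y j)).
Hypothesis hHfin : forall g, mu.-integrable setT (fun x => (hfun c y w g x)%:E).

Definition qq g j := fine (mu (Aset c y g j)).
Definition Hr g := fine (Hsd c y w mu g).

Lemma mu_Aset g j : mu (Aset c y g j) = (qq g j)%:E.
Proof. by rewrite /qq fineK //; apply: fin_num_measure; exact: (Aset_meas hcm). Qed.

Lemma qq_ge0 g j : 0 <= qq g j.
Proof. by rewrite -lee_fin -mu_Aset measure_ge0. Qed.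

Lemma Hsd_Hr g : Hsd c y w mu g = (Hr g)%:E.
Proof. by rewrite /Hr fineK //; exact: integrable_fin_num (hHfin g). Qed.

Lemma indicA g j x : \1_(Aset c y g j) x = (ix c y j0 g x == j)%:R :> R.
Proof.
rewrite indicE; case: eqP => [<-|ne].
  by rewrite mem_set //; rewrite /Aset /= (lag_ix _ _ j0).
by rewrite memNset //; rewrite /Aset /= (lag_ix _ _ j0) => -[/ne].
Qed.

Lemma int_indic g j : mu.-integrable setT (fun x => (\1_(Aset c y g j) x)%:E).
Proof. by apply: integrable_indic; exact: (Aset_meas hcm). Qed.

Lemma sum_qq g : \sum_j qq g j = 1.
Proof.
apply: EFin_inj; rewrite -sumEFin.
transitivity (\sum_j \int[mu]_(x in setT) (\1_(Aset c y g j) x)%:E)%E.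
  apply: eq_bigr => j _; rewrite integral_indic //; last exact: (Aset_meas hcm).
  by rewrite setIT /qq fineK //; apply: fin_num_measure; exact: (Aset_meas hcm).
transitivity (\int[mu]_(x in setT) (\sum_j (\1_(Aset c y g j) x)%:E))%E.
  by rewrite integral_sum // => j; exact: int_indic.
transitivity (\int[mu]_(x in setT) (cst 1%:E) x)%E.
  apply: eq_integral => x _.
  rewrite sumEFin; congr (_%:E).
  under eq_bigr do rewrite indicA.
  rewrite (eq_bigr (fun i => (ix c y j0 g x == i)%:R * 1)); first exact: sum_delta.
  by move=> i _; rewrite mulr1.
by rewrite integral_cst // mul1e; exact: probability_setT.
Qed.

Lemma int_cst (k : R) : mu.-integrable setT (fun x => k%:E).
Proof. exact: (@finite_measure_integrable_cst _ _ R mu setT k measurableT). Qed.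

Lemma Hr_sub g g' : Hr g + \sum_j (qq g j - w j) * (g' j - g j) <= Hr g'.
Proof.
pose dl j := g' j - g j.
pose f2 x := (\sum_j (dl j)%:E * (\1_(Aset c y g j) x)%:E)%E.
have i2 : mu.-integrable setT f2.
  apply: (integrable_sum measurableT) => j _; apply: (integrableZl measurableT); exact: int_indic.
have i23 : mu.-integrable setT (fun x => f2 x + (- \sum_j w j * dl j)%:E)%E.
  have := integrableD measurableT i2 (int_cst (- \sum_j w j * dl j)); exact.
have e : ((Hr g + \sum_j (qq g j - w j) * (g' j - g j))%:E =
   \int[mu]_(x in setT) ((hfun c y w g x)%:E + (f2 x + (- \sum_j w j * dl j)%:E)))%E.
  rewrite (integralD measurableT (hHfin g) i23).
  rewrite (integralD measurableT i2 (int_cst _)).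
  rewrite -/(Hsd c y w mu g) Hsd_Hr integral_cst //.
  rewrite [X in (_ * X)%E](probability_setT mu).
  rewrite mule1.
  rewrite /f2 integral_sum //; last first.
    by move=> j; apply: (integrableZl measurableT); exact: int_indic.
  have -> : (\sum_j \int[mu]_(x in setT) ((dl j)%:E * (\1_(Aset c y g j) x)%:E) =
             \sum_j ((dl j * qq g j)%:E))%E.
    apply: eq_bigr => j _; rewrite integralZl //; last exact: int_indic.
    rewrite integral_indic //; last exact: (Aset_meas hcm).
    by rewrite setIT [X in (_ * X)%E]mu_Aset.
  rewrite sumEFin -!EFinD; congr (_%:E).
  rewrite (eq_bigr (fun j => dl j * qq g j - w j * dl j)); last first.
    by move=> j _; rewrite /dl; ring.
  by rewrite sumrB; ring.
rewrite -lee_fin e -[X in (_ <= X)%E]Hsd_Hr.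
apply: le_integral => //.
  apply: integrableD => //; exact: hHfin.
move=> x _.
rewrite /f2.
under eq_bigr do rewrite -EFinM indicA.
rewrite sumEFin -!EFinD lee_fin.
have H := hfun_sub c y w j0 g g' x.
have e2 : \sum_j ((ix c y j0 g x == j)%:R - w j) * (g' j - g j) =
   \sum_i dl i * (ix c y j0 g x == i)%:R - \sum_j w j * dl j.
  by rewrite -sumrB; apply: eq_bigr => j _; rewrite /dl; ring.
lra.
Qed.

End Integ.

Lemma coord_proj (R : realType) (z p u B : R) : `|p| <= B -> `|u| <= B ->
  (forall v, `|v| <= B -> (z - p) ^+ 2 <= (z - v) ^+ 2) ->
  (p - u) ^+ 2 <= (z - u) ^+ 2.
Proof.
move=> hp hu H.
have [hp1 hp2] : -B <= p /\ p <= B by split; move: hp; rewrite ler_norml => /andP[].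
have [hu1 hu2] : -B <= u /\ u <= B by split; move: hu; rewrite ler_norml => /andP[].
have hB : 0 <= B by apply: le_trans hp; exact: normr_ge0.
case: (lerP B z) => hz.
  have := H B; rewrite ger0_norm // lexx => /(_ isT) h.
  have pB : p = B by nra.
  rewrite pB; nra.
case: (lerP z (-B)) => hz'.
  have := H (-B); rewrite normrN ger0_norm // lexx => /(_ isT) h.
  have pB : p = - B by nra.
  rewrite pB; nra.
have := H z; rewrite subrr expr0n /= => h.
have : `|z| <= B by rewrite ler_norml; apply/andP; split; lra.
move=> /h hz2.
have pz : p = z by nra.
by rewrite pz.
Qed.

Lemma enorm_le (R : realType) M (a b : 'I_M -> R) :
  enorm a <= enorm b -> \sum_j a j ^+ 2 <= \sum_j b j ^+ 2.
Proof.
rewrite /enorm ler_sqrt //; apply: sumr_ge0 => j _; exact: sqr_ge0.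
Qed.

Section Proj.
Variables (R : realType) (d M : nat).
Local Notation T := (d.-tuple R).
Variables (c : T -> T -> R) (y : 'I_M -> T) (K : set T).
Variables (proj : ('I_M -> R) -> ('I_M -> R)).
Hypothesis hproj : is_eucl_proj (Cset c y K) proj.

Lemma proj_in z : Cset c y K (proj z).
Proof. by case: (hproj z). Qed.

Lemma proj_coord z (j : 'I_M) v : `|v| <= cnormK c y K ->
  (z j - proj z j) ^+ 2 <= (z j - v) ^+ 2.
Proof.
move=> hv.
pose u := fun i => if i == j then v else proj z i.
have hu : Cset c y K u.
  move=> i; rewrite /u; case: eqP => // _; exact: (proj_in z).
have := enorm_le ((hproj z).2 u hu).
rewrite (bigD1 j) //= [X in _ <= X](bigD1 j) //= /u eqxx.
have e : \sum_(i < M | i != j) (z i - (if i == j then v else proj z i)) ^+ 2 =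
   \sum_(i < M | i != j) (z i - proj z i) ^+ 2 by apply: eq_bigr => i /negbTE ->.
by rewrite e lerD2r.
Qed.

Lemma proj_contr z u : Cset c y K u ->
  \sum_j (proj z j - u j) ^+ 2 <= \sum_j (z j - u j) ^+ 2.
Proof.
move=> hu; apply: ler_sum => j _; apply: coord_proj.
- exact: (proj_in z j).
- exact: hu.
- move=> v hv; exact: proj_coord.
Qed.

End Proj.

Section DiamS.
Variables (R : realType) (d M : nat).
Local Notation T := (d.-tuple R).
Variables (c : T -> T -> R) (y : 'I_M -> T) (K : set T).

Lemma Diam_ub u v : Cset c y K u -> Cset c y K v ->
  enorm (fun j => u j - v j) <= Diam (Cset c y K).
Proof.
move=> hu hv; apply: ub_le_sup; last by exists u, v.
exists (Num.sqrt (\sum_(j < M) (2 * cnormK c y K) ^+ 2)).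
move=> r [u' [v' [hu' [hv' ->]]]].
rewrite /enorm ler_sqrt; last by apply: sumr_ge0 => j _; exact: sqr_ge0.
apply: ler_sum => j _.
have h1 := hu' j; have h2 := hv' j.
have : `|u' j - v' j| <= 2 * cnormK c y K.
  apply: le_trans (ler_normB _ _) _; lra.
move=> h3.
rewrite -real_normK ?num_real //; apply: lerXn2r => //.
- rewrite nnegrE; apply: le_trans h3; exact: normr_ge0.
Qed.

Lemma Diam_ge0 u : Cset c y K u -> 0 <= Diam (Cset c y K).
Proof.
move=> hu; apply: le_trans (Diam_ub hu hu).
exact: sqrtr_ge0.
Qed.

Lemma Diam_sq u v : Cset c y K u -> Cset c y K v ->
  \sum_j (u j - v j) ^+ 2 <= Diam (Cset c y K) ^+ 2.
Proof.
move=> hu hv.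
have h := Diam_ub hu hv.
have h0 : 0 <= \sum_j (u j - v j) ^+ 2 by apply: sumr_ge0 => j _; exact: sqr_ge0.
rewrite -(sqr_sqrtr h0).
apply: lerXn2r => //; rewrite ?nnegrE ?sqrtr_ge0 //.
exact: Diam_ge0 hu.
Qed.

Lemma Diam_coord u v j : Cset c y K u -> Cset c y K v ->
  `|u j - v j| <= Diam (Cset c y K).
Proof.
move=> hu hv; apply: le_trans (Diam_ub hu hv).
rewrite /enorm -sqrtr_sqr ler_sqrt; last by apply: sumr_ge0 => i _; exact: sqr_ge0.
rewrite (bigD1 j) //= lerDl; apply: sumr_ge0 => i _; exact: sqr_ge0.
Qed.

End DiamS.

Section Paths.
Variables (R : realType) (M : nat).
Variables (w : 'I_M -> R) (proj : ('I_M -> R) -> ('I_M -> R)) (gam : nat -> R).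
Variables (g0 : 'I_M -> R) (j0 : 'I_M) (q : ('I_M -> R) -> 'I_M -> R).

Definition step k (g : 'I_M -> R) (a : 'I_M) : 'I_M -> R :=
  proj (fun i => g i - gam k * ((a == i)%:R - w i)).

Fixpoint Gk (s : seq 'I_M) (k : nat) : 'I_M -> R :=
  match k with 0 => g0 | k'.+1 => step k'.+1 (Gk s k') (nth j0 s k') end.

Definition Gs s := Gk s (size s).

Fixpoint Ex (pre : seq 'I_M) (m : nat) (F : seq 'I_M -> R) : R :=
  match m with
  | 0 => F pre
  | m'.+1 => \sum_j q (Gs pre) j * Ex (rcons pre j) m' F
  end.

Lemma Gk_prefix s t k : (forall i, (i < k)%N -> nth j0 s i = nth j0 t i) ->
  Gk s k = Gk t k.
Proof.
elim: k => [//|k IH] H /=.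
rewrite IH; last by move=> i hi; apply: H; exact: ltnW.
by rewrite H.
Qed.

Lemma Gk_take s k : (k <= size s)%N -> Gk s k = Gs (take k s).
Proof.
move=> hk; rewrite /Gs size_take_min (minn_idPl hk).
apply: Gk_prefix => i hi; by rewrite nth_take.
Qed.

Lemma Gs_rcons s j : Gs (rcons s j) = step (size s).+1 (Gs s) j.
Proof.
rewrite /Gs size_rcons /= nth_rcons ltnn eqxx.
congr step; apply: Gk_prefix => i hi; by rewrite nth_rcons hi.
Qed.

Hypothesis hq0 : forall g j, 0 <= q g j.
Hypothesis hq1 : forall g, \sum_j q g j = 1.

Lemma Ex_le pre m F F' : (forall t, size t = m -> F (pre ++ t) <= F' (pre ++ t)) ->
  Ex pre m F <= Ex pre m F'.
Proof.
elim: m pre => [|m IH] pre H /=.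
  by have := H [::] erefl; rewrite cats0.
apply: ler_sum => j _; apply: ler_wpM2l => //; apply: IH => t ht.
by rewrite cat_rcons; apply: H => /=; rewrite ht.
Qed.

Lemma Ex_ext pre m F F' : (forall t, size t = m -> F (pre ++ t) = F' (pre ++ t)) ->
  Ex pre m F = Ex pre m F'.
Proof.
move=> H; apply/eqP; rewrite eq_le; apply/andP; split; apply: Ex_le => t ht;
  by rewrite H.
Qed.

Lemma Ex_cst pre m a : Ex pre m (fun _ => a) = a.
Proof.
elim: m pre => [//|m IH] pre /=.
under eq_bigr do rewrite IH.
by rewrite -mulr_suml hq1 mul1r.
Qed.

Lemma Ex_add pre m F F' : Ex pre m (fun s => F s + F' s) = Ex pre m F + Ex pre m F'.
Proof.
elim: m pre => [//|m IH] pre /=.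
rewrite -big_split /=; apply: eq_bigr => j _; by rewrite IH mulrDr.
Qed.

Lemma Ex_scale pre m a F : Ex pre m (fun s => a * F s) = a * Ex pre m F.
Proof.
elim: m pre => [//|m IH] pre /=.
rewrite mulr_sumr; apply: eq_bigr => j _; rewrite IH; ring.
Qed.

Lemma Ex_sum pre m N (F : nat -> seq 'I_M -> R) :
  Ex pre m (fun s => \sum_(k < N) F k s) = \sum_(k < N) Ex pre m (F k).
Proof.
elim: N => [|N IH].
  rewrite big_ord0 (Ex_ext (F' := fun _ => 0)) ?Ex_cst // => t _; by rewrite big_ord0.
rewrite big_ord_recr /= -IH -Ex_add; apply: Ex_ext => t _; by rewrite big_ord_recr.
Qed.

Lemma Ex_last pre m F :
  Ex pre m.+1 F = Ex pre m (fun s => \sum_j q (Gs s) j * F (rcons s j)).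
Proof.
elim: m pre => [//|m IH] pre.
transitivity (\sum_j q (Gs pre) j * Ex (rcons pre j) m.+1 F); first by [].
transitivity (\sum_j q (Gs pre) j * Ex (rcons pre j) m
   (fun s => \sum_j q (Gs s) j * F (rcons s j))); last by [].
apply: eq_bigr => j _; by rewrite IH.
Qed.

Lemma Ex_marg pre m l F :
  Ex pre (m + l) (fun s => F (take (size pre + m) s)) = Ex pre m F.
Proof.
elim: m pre => [|m IH] pre.
  rewrite add0n addn0 /= (Ex_ext (F' := fun _ => F pre)) ?Ex_cst // => t _.
  by rewrite take_size_cat.
rewrite addSn /=; apply: eq_bigr => j _; rewrite -IH size_rcons addSnnS.
by [].
Qed.

End Paths.

Section Allp.
Variables (R : realType) (M : nat).
Variables (w : 'I_M -> R) (proj : ('I_M -> R) -> ('I_M -> R)) (gam : nat -> R).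
Variables (g0 : 'I_M -> R) (j0 : 'I_M) (q : ('I_M -> R) -> 'I_M -> R).

Fixpoint allp (m : nat) : seq (seq 'I_M) :=
  if m is m'.+1 then [seq j :: t | j <- index_enum 'I_M, t <- allp m'] else [:: [::]].

Lemma mem_allp m s : (s \in allp m) = (size s == m).
Proof.
elim: m s => [|m IH] s.
  by rewrite mem_seq1 size_eq0.
apply/allpairsP/idP.
  by move=> [[j' t'] /= [_ ht' ->]]; rewrite /= eqSS -IH.
case: s => [//|j t] /=; rewrite eqSS -IH => ht.
exists (j, t) => /=; split => //; exact: mem_index_enum.
Qed.

Lemma uniq_allp m : uniq (allp m).
Proof.
elim: m => [//|m IH] /=.
apply: allpairs_uniq => //; first exact: index_enum_uniq.
by move=> [j t] [j' t'] _ _ /= [-> ->].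
Qed.

Local Notation Gs := (Gs w proj gam g0 j0).
Local Notation Ex := (Ex w proj gam g0 j0 q).

Definition Wp pre t := \prod_(i < size t) q (Gs (pre ++ take i t)) (nth j0 t i).

Lemma Wp_cons pre j t : Wp pre (j :: t) = q (Gs pre) j * Wp (rcons pre j) t.
Proof.
rewrite /Wp /= big_ord_recl /= cats0; congr (_ * _).
by apply: eq_bigr => i _; rewrite /bump /= cat_rcons.
Qed.

Lemma Ex_allp pre m F :
  Ex pre m F = \sum_(t <- allp m) Wp pre t * F (pre ++ t).
Proof.
elim: m pre => [|m IH] pre.
  by rewrite /= big_seq1 /Wp big_ord0 mul1r cats0.
rewrite /= big_allpairs_dep /=; apply: eq_bigr => j _.
rewrite IH mulr_sumr; apply: eq_bigr => t _.
by rewrite Wp_cons cat_rcons mulrA.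
Qed.

End Allp.

Lemma sum_delta' (R : realType) M (j : 'I_M) (a : 'I_M -> R) :
  \sum_i (j == i)%:R * a i = a j.
Proof.
rewrite (bigD1 j) //= eqxx mul1r big1 ?addr0 // => i ij.
by rewrite eq_sym (negbTE ij) mul0r.
Qed.

Section Analysis.
Variables (R : realType) (M : nat).
Variables (w : 'I_M -> R) (proj : ('I_M -> R) -> ('I_M -> R)) (gam : nat -> R).
Variables (g0 : 'I_M -> R) (j0 : 'I_M) (q : ('I_M -> R) -> 'I_M -> R).
Variables (Hr : ('I_M -> R) -> R) (gstar : 'I_M -> R) (C : set ('I_M -> R)) (Dm : R).
Hypothesis hq0 : forall g j, 0 <= q g j.
Hypothesis hq1 : forall g, \sum_j q g j = 1.
Hypothesis hsub : forall g g', Hr g + \sum_j (q g j - w j) * (g' j - g j) <= Hr g'.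
Hypothesis hcontr : forall z u, C u ->
  \sum_j (proj z j - u j) ^+ 2 <= \sum_j (z j - u j) ^+ 2.
Hypothesis hprojC : forall z, C (proj z).
Hypothesis hg0 : C g0.
Hypothesis hgs : C gstar.
Hypothesis hdiam : forall u v, C u -> C v -> \sum_j (u j - v j) ^+ 2 <= Dm ^+ 2.
Hypothesis hw0 : forall j, 0 <= w j.
Hypothesis hw1 : \sum_j w j = 1.
Hypothesis hgam : forall k, 0 <= gam k.

Local Notation Gs := (Gs w proj gam g0 j0).
Local Notation Gk := (Gk w proj gam g0 j0).
Local Notation Ex := (Ex w proj gam g0 j0 q).

Lemma Gk_in s k : C (Gk s k).
Proof. by case: k => [//|k] /=; exact: hprojC. Qed.

Lemma Gs_in s : C (Gs s).
Proof. exact: Gk_in. Qed.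

Definition Dd s := \sum_i (Gs s i - gstar i) ^+ 2.
Definition Hd s := Hr (Gs s) - Hr gstar.

Lemma w_le1 j : w j <= 1.
Proof.
rewrite -hw1 (bigD1 j) //= lerDl; apply: sumr_ge0 => i _; exact: hw0.
Qed.

Lemma vnorm (j : 'I_M) : \sum_i ((j == i)%:R - w i) ^+ 2 <= 2.
Proof.
apply: (@le_trans _ _ (\sum_i ((j == i)%:R + w i))).
  apply: ler_sum => i _; have h0 := hw0 i; have h1 := w_le1 i.
  case: (j == i) => /=; nra.
rewrite big_split /= hw1.
rewrite (eq_bigr (fun i => (j == i)%:R * 1)); last by move=> i _; rewrite mulr1.
rewrite sum_delta'; lra.
Qed.

Lemma one_step s :
  \sum_j q (Gs s) j * Dd (rcons s j) <=
  Dd s - 2 * gam (size s).+1 * Hd s + 2 * gam (size s).+1 ^+ 2.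
Proof.
set gm := gam (size s).+1.
set G := Gs s.
pose Dl i := G i - gstar i.
pose S := \sum_i w i * Dl i.
have hgm : 0 <= gm := hgam _.
have e1 : forall j, Dd (rcons s j) <= Dd s - 2 * gm * (Dl j - S) + 2 * gm ^+ 2.
  move=> j; rewrite /Dd Gs_rcons /step -/G -/gm.
  apply: le_trans (hcontr _ hgs) _.
  rewrite (eq_bigr (fun i => Dl i ^+ 2 + (- 2 * gm) * (((j == i)%:R - w i) * Dl i)
            + gm ^+ 2 * (((j == i)%:R - w i) ^+ 2))); last first.
    by move=> i _; rewrite /Dl; ring.
  rewrite !big_split /= -!mulr_sumr.
  have -> : \sum_i ((j == i)%:R - w i) * Dl i = Dl j - S.
    rewrite (eq_bigr (fun i => (j == i)%:R * Dl i - w i * Dl i)); last by move=> i _; ring.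
    by rewrite sumrB sum_delta'.
  have hv := vnorm j.
  have : gm ^+ 2 * \sum_i ((j == i)%:R - w i) ^+ 2 <= gm ^+ 2 * 2.
    by apply: ler_wpM2l => //; exact: sqr_ge0.
  rewrite /Dd -/G; lra.
apply: (@le_trans _ _ (\sum_j q G j * (Dd s - 2 * gm * (Dl j - S) + 2 * gm ^+ 2))).
  apply: ler_sum => j _; apply: ler_wpM2l => //; exact: e1.
rewrite (eq_bigr (fun j => q G j * (Dd s + 2 * gm * S + 2 * gm ^+ 2) - (2 * gm) * (q G j * Dl j)));
  last by move=> j _; ring.
rewrite sumrB -mulr_suml hq1 mul1r -mulr_sumr.
have hs := hsub G gstar.
have e2 : \sum_j (q G j - w j) * (gstar j - G j) = - (\sum_j q G j * Dl j) + S.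
  rewrite /S -sumrN -big_split /=; apply: eq_bigr => j _; rewrite /Dl; ring.
rewrite e2 in hs.
have : 2 * gm * Hd s <= 2 * gm * (\sum_j q G j * Dl j - S).
  apply: ler_wpM2l; first lra.
  rewrite /Hd -/G; lra.
lra.
Qed.

Definition aa k := Ex [::] k Dd.
Definition hh k := Ex [::] k Hd.

Lemma aa_rec k : aa k.+1 <= aa k - 2 * gam k.+1 * hh k + 2 * gam k.+1 ^+ 2.
Proof.
rewrite /aa /hh Ex_last.
apply: (@le_trans _ _ (Ex [::] k (fun s => Dd s + ((- 2 * gam k.+1) * Hd s
   + 2 * gam k.+1 ^+ 2)))).
  apply: Ex_le => // t ht; rewrite cat0s.
  have := one_step t; rewrite ht => h; lra.
rewrite Ex_add // Ex_add // Ex_cst // (Ex_scale _ _ _ _ _ _ [::] k (-2 * gam k.+1) Hd); lra.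
Qed.

Lemma aa_bnd k : 0 <= aa k <= Dm ^+ 2.
Proof.
apply/andP; split.
  rewrite -(Ex_cst w proj gam g0 j0 hq1 [::] k 0) /aa.
  apply: Ex_le => // t _; apply: sumr_ge0 => i _; exact: sqr_ge0.
rewrite -(Ex_cst w proj gam g0 j0 hq1 [::] k (Dm ^+ 2)) /aa.
apply: Ex_le => // t _; apply: hdiam => //; exact: Gs_in.
Qed.

Definition gavg n s := fun i => (n.+1%:R)^-1 * \sum_(k < n.+1) Gk s k i.

Lemma jensen n s : size s = n ->
  Hr (gavg n s) - Hr gstar <= (n.+1%:R)^-1 * \sum_(k < n.+1) Hd (take k s).
Proof.
move=> hs.
set gb := gavg n s.
have hN : 0 < n.+1%:R :> R by rewrite ltr0n.
have H : forall k : 'I_n.+1, Hr gb + \sum_i (q gb i - w i) * (Gk s k i - gb i) <= Hr (Gk s k).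
  move=> k; exact: hsub.
have H2 : \sum_(k < n.+1) (Hr gb + \sum_i (q gb i - w i) * (Gk s k i - gb i)) <= \sum_(k < n.+1) Hr (Gk s k).
  by apply: ler_sum => k _; exact: H.
rewrite big_split /= in H2.
have e0 : \sum_(k < n.+1) \sum_i (q gb i - w i) * (Gk s k i - gb i) = 0.
  rewrite exchange_big /=; apply: big1 => i _.
  rewrite -mulr_sumr sumrB sumr_const card_ord.
  suff -> : \sum_(k < n.+1) Gk s k i = gb i *+ n.+1 by rewrite subrr mulr0.
  rewrite /gb /gavg -mulr_natr mulrC mulrA mulfV ?mul1r //; lra.
rewrite e0 addr0 sumr_const card_ord in H2.
have e3 : \sum_(k < n.+1) Hd (take k s) = \sum_(k < n.+1) Hr (Gk s k) - Hr gstar *+ n.+1.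
  rewrite /Hd sumrB sumr_const card_ord; congr (_ - _).
  apply: eq_bigr => k _; rewrite Gk_take // hs; exact: (ltn_ord k).
rewrite e3 mulrBr.
have e4 : (n.+1%:R)^-1 * (Hr gstar *+ n.+1) = Hr gstar :> R.
  by rewrite -[Hr gstar *+ n.+1]mulr_natr mulrCA mulVf ?mulr1 // pnatr_eq0.
rewrite e4.
have : Hr gb <= (n.+1%:R)^-1 * \sum_(k < n.+1) Hr (Gk s k).
  rewrite -(ler_pM2l hN) mulrA mulfV ?mul1r; last by rewrite pnatr_eq0.
  rewrite -[Hr gb *+ n.+1]mulr_natr in H2.
  lra.
move=> hh0; by rewrite lerD2r.
Qed.

Lemma Ex_final n :
  Ex [::] n (fun s => Hr (gavg n s) - Hr gstar) <=
  (n.+1%:R)^-1 * \sum_(k < n.+1) hh k.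
Proof.
apply: (@le_trans _ _ (Ex [::] n (fun s => (n.+1%:R)^-1 * \sum_(k < n.+1) Hd (take k s)))).
  apply: Ex_le => // t ht; exact: jensen.
rewrite Ex_scale // (Ex_sum _ _ _ _ _ _ hq1 [::] n n.+1 (fun k s => Hd (take k s))).
apply: ler_wpM2l; first by rewrite invr_ge0 ler0n.
apply: ler_sum => k _; rewrite le_eqVlt; apply/orP; left; apply/eqP.
have hk : (k <= n)%N by rewrite -ltnS.
rewrite /hh -(Ex_marg w proj gam g0 j0 hq0 hq1 [::] k (n - k) Hd) /= subnKC //.
exact: hq0.
Qed.

End Analysis.

Lemma sum_isqrt (R : realType) m :
  \sum_(k < m) (Num.sqrt (k.+1%:R : R))^-1 <= 2 * Num.sqrt m%:R.
Proof.
elim: m => [|m IH]; first by rewrite big_ord0 sqrtr0 mulr0.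
rewrite big_ord_recr /=.
set a := Num.sqrt (m%:R : R) in IH *.
set b := Num.sqrt (m.+1%:R : R).
have ha : 0 <= a := sqrtr_ge0 _.
have hb : 0 < b by rewrite sqrtr_gt0 ltr0n.
have ha2 : a ^+ 2 = m%:R by rewrite sqr_sqrtr // ler0n.
have hb2 : b ^+ 2 = m%:R + 1 by rewrite sqr_sqrtr ?ler0n // -natr1.
have hib : b * b^-1 = 1 by rewrite mulfV // gt_eqF.
have hib0 : 0 < b^-1 by rewrite invr_gt0.
have h1 : 2 * a * b <= a ^+ 2 + b ^+ 2.
  have := sqr_ge0 (a - b); lra.
have key : 2 * a + b^-1 <= 2 * b.
  rewrite -(ler_pM2l hb) mulrDr hib; lra.
lra.
Qed.

Lemma seq_bound (R : realType) (a h gm cc : nat -> R) (D2 : R) :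
  (forall k, 0 <= a k <= D2) ->
  (forall k, h k <= cc k.+1 * (a k - a k.+1) + gm k.+1) ->
  (forall k, 0 <= cc k) -> (forall k, cc k <= cc k.+1) ->
  forall m, \sum_(k < m.+1) h k <= cc m.+1 * (D2 - a m.+1) + \sum_(k < m.+1) gm k.+1.
Proof.
move=> ha hh hc hcc; elim => [|m IH].
  rewrite !big_ord_recr !big_ord0 /= !add0r.
  have := hh 0%N; have /andP[h1 h2] := ha 0%N; have := hc 1%N.
  nra.
rewrite big_ord_recr [X in _ <= _ + X]big_ord_recr /=.
have := hh m.+1; have /andP[h1 h2] := ha m.+1; have := hcc m.+1.
nra.
Qed.

Lemma gammak_sqrt (R : realType) (g1 : R) k : (0 < k)%N ->
  gammak g1 2^-1 k = g1 / Num.sqrt k%:R.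
Proof.
move=> hk; rewrite /gammak powRN powR12_sqrt // ler0n.
Qed.

Lemma gammak_ge0 (R : realType) (g1 : R) k : 0 <= g1 -> 0 <= gammak g1 2^-1 k.
Proof. move=> h; rewrite /gammak; apply: mulr_ge0 => //; exact: powR_ge0. Qed.

Section Link.
Variables (R : realType) (d M : nat).
Local Notation T := (d.-tuple R).
Variables (c : T -> T -> R) (y : 'I_M -> T) (w : 'I_M -> R).
Variables (proj : ('I_M -> R) -> ('I_M -> R)).
Variables (gamma1 b : R) (g0 : 'I_M -> R).
Variables (dO : measure_display) (O : measurableType dO).
Variables (X : nat -> O -> T) (j0 : 'I_M) (n : nat).
Local Notation gm := (gammak gamma1 b).
Local Notation psg := (psgd c y w proj gamma1 b g0 X).
Local Notation Gk := (Gk w proj gm g0 j0).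

Definition Jf om i := ix c y j0 (psg i.-1 om) (X i om).
Definition pathf om := mkseq (fun i => Jf om i.+1) n.

Lemma psgd_Gk om k : (k <= n)%N -> psg k om = Gk (pathf om) k.
Proof.
elim: k => [//|k IH] hk.
have e := IH (ltnW hk).
rewrite /= nth_mkseq // /Jf /= e /step; congr proj; apply/funext => j.
rewrite /subgrad (lag_ix c y j0) (inj_eq (@Some_inj _)).
by case: (_ == _).
Qed.

Definition Bs s i := Aset c y (Gk s i) (nth j0 s i).
Definition Ev s := \bigcap_(i in [set i | i \in iota 0 n]) ((fun k => X k.+1) i @^-1` Bs s i).

Lemma Ev_iff s om : size s = n -> (Ev s om <-> pathf om = s).
Proof.
move=> hs; split.
  move=> Hev.
  have key : forall k, (k <= n)%N -> forall i, (i < k)%N -> Jf om i.+1 = nth j0 s i.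
    elim => [//|k IH] hk i0; rewrite ltnS leq_eqVlt => /orP[/eqP ->|hi]; last first.
      exact: IH (ltnW hk) i0 hi.
    have hx : Bs s k (X k.+1 om) by apply: Hev; change (k \in iota 0 n); rewrite mem_iota add0n.
    rewrite /Jf (psgd_Gk om (ltnW hk)).
    have -> : Gk (pathf om) k = Gk s k.
      apply: Gk_prefix => i1 hi1; rewrite nth_mkseq; last exact: leq_trans hi1 (ltnW hk).
      exact: IH (ltnW hk) i1 hi1.
    by rewrite /ix hx.
  apply: (@eq_from_nth _ j0); first by rewrite size_mkseq hs.
  move=> i; rewrite size_mkseq => hi; rewrite nth_mkseq //; exact: key n (leqnn n) i hi.
move=> <- i hi0.
have hi : (i < n)%N by move: hi0; change (i \in iota 0 n -> (i < n)%N); rewrite mem_iota add0n.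
change (lag c y (Gk (pathf om) i) (X i.+1 om) = Some (nth j0 (pathf om) i)).
rewrite -(psgd_Gk om (ltnW hi)) nth_mkseq // /Jf.
exact: lag_ix.
Qed.

Variables (mu : probability T R) (P : probability O R).
Hypothesis hcm : forall j, measurable_fun setT (fun x => c x (y j)).
Hypothesis hX : iid_law P (fun k => X k.+1) mu.

Lemma Ev_meas s : measurable (Ev s).
Proof.
apply: bigcap_measurableType => i _.
case: hX => hm _ _.
have := hm i measurableT _ (Aset_meas hcm (Gk s i) (nth j0 s i)).
by rewrite setTI.
Qed.

Lemma P_Ev s : P (Ev s) = (\prod_(i <- iota 0 n) qq mu c y (Gk s i) (nth j0 s i))%:E.
Proof.
case: hX => _ hlaw hind.
rewrite /Ev (hind (iota 0 n) (Bs s)) ?iota_uniq //; last first.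
  by move=> i; exact: (Aset_meas hcm).
rewrite -prodEFin; apply: eq_bigr => i _.
rewrite hlaw; last exact: (Aset_meas hcm).
exact: mu_Aset.
Qed.

Lemma integral_link (V : seq 'I_M -> R) :
  (\int[P]_om (V (pathf om))%:E =
   (\sum_(s <- allp M n) V s * \prod_(i <- iota 0 n) qq mu c y (Gk s i) (nth j0 s i))%:E)%E.
Proof.
transitivity (\int[P]_om (\sum_(s <- allp M n) (V s)%:E * (\1_(Ev s) om)%:E))%E.
  apply: eq_integral => om _.
  have hp : pathf om \in allp M n by rewrite mem_allp size_mkseq.
  rewrite (bigD1_seq (pathf om) hp (uniq_allp M n)) /=.
  rewrite indicE mem_set; last by apply/Ev_iff => //; rewrite size_mkseq.
  rewrite mule1 big_seq_cond big1 ?adde0 // => s /andP[hs hne].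
  rewrite indicE memNset ?mule0 //.
  move=> /Ev_iff; rewrite mem_allp in hs; move=> /(_ (eqP hs)) he.
  by move: hne; rewrite he eqxx.
rewrite integral_sum //; last first.
  move=> s; apply: (integrableZl measurableT); apply: integrable_indic; exact: Ev_meas.
rewrite -sumEFin; apply: eq_bigr => s _.
rewrite integralZl //; last first.
  apply: integrable_indic; exact: Ev_meas.
rewrite integral_indic //; last exact: Ev_meas.
by rewrite setIT [X in (_ * X)%E]P_Ev -EFinM.
Qed.

End Link.

Unset Implicit Arguments. Set Strict Implicit.


Theorem theorem3p2 (R : realType) (d M : nat)
  (mu : probability (d.-tuple R) R)
  (w : 'I_M -> R) (y : 'I_M -> d.-tuple R)
  (c : d.-tuple R -> d.-tuple R -> R)
  (hw : forall j, 0 < w j) (hw1 : \sum_j w j = 1)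
  (hc0 : forall x x', 0 <= c x x')
  (hcm : forall j, measurable_fun setT (fun x => c x (y j)))
  (hHfin : forall g, mu.-integrable setT (fun x => (hfun c y w g x)%:E))
  (gstar : 'I_M -> R)
  (hmin : forall g, (Hsd c y w mu gstar <= Hsd c y w mu g)%E)
  (K : set (d.-tuple R))
  (hKc : compact (@tup2rv R d @` K)) (hKm : measurable K)
  (hKb : exists B : R, forall x j, K x -> `|c x (y j)| <= B)
  (hmuK : ((1 - wmin w / 2)%:E <= mu K)%E)
  (hgs : Cset c y K gstar)
  (proj : ('I_M -> R) -> ('I_M -> R))
  (hproj : is_eucl_proj (Cset c y K) proj)
  (dO : measure_display) (O : measurableType dO) (P : probability O R)
  (X : nat -> O -> d.-tuple R) (hX : iid_law P (fun k => X k.+1) mu)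
  (g0 : 'I_M -> R) (hg0 : Cset c y K g0)
  (n : nat) (hn : (1 <= n)%N) :
  let gamma1 := Diam (Cset c y K) / (2 * Num.sqrt 2) in
  let b := 2^-1 in
  (\int[P]_om (Hsd c y w mu (gbar c y w proj gamma1 b g0 X n om)
                 - Hsd c y w mu gstar)
     <= ((4 * Num.sqrt 2 * Diam (Cset c y K)) / Num.sqrt n%:R)%:E)%E.
Proof.
cbv zeta.
set gamma1 := Diam (Cset c y K) / (2 * Num.sqrt 2).
set b : R := 2^-1.
have hM : (0 < M)%N.
  case: (posnP M) => // M0; exfalso.
  move: hw1; rewrite big1 => [|j _]; first by move/eqP; rewrite eq_sym oner_eq0.
  by have := leq_trans (ltn_ord j) (eq_leq M0).
pose j0 : 'I_M := Ordinal hM.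
set C := Cset c y K.
have hD0 : 0 <= Diam C := Diam_ge0 hg0.
set D := Diam C.
pose gm := gammak gamma1 b.
pose q := qq mu c y.
pose H := Hr mu c y w.
have hq0 : forall g j, 0 <= q g j := qq_ge0 mu hcm.
have hq1 : forall g, \sum_j q g j = 1 := sum_qq mu j0 hcm.
have hsub : forall g g', H g + \sum_j (q g j - w j) * (g' j - g j) <= H g' :=
  Hr_sub j0 hcm hHfin.
have hcontr := proj_contr hproj.
have hprojC := proj_in hproj.
have hdiam : forall u v, C u -> C v -> \sum_j (u j - v j) ^+ 2 <= D ^+ 2 :=
  @Diam_sq _ _ _ c y K.
have hw0 : forall j, 0 <= w j by move=> j; exact: ltW.
have hs2 : 0 < Num.sqrt 2 :> R by rewrite sqrtr_gt0.
have hg1 : 0 <= gamma1.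
  rewrite /gamma1; apply: divr_ge0 => //; apply: mulr_ge0 => //; exact: ltW.
have hgam : forall k, 0 <= gm k := fun k => gammak_ge0 k hg1.
pose Vf s := H (gavg w proj gm g0 j0 n s) - H gstar.
have hA : (\int[P]_om (Hsd c y w mu (gbar c y w proj gamma1 b g0 X n om)
                 - Hsd c y w mu gstar) = (Ex w proj gm g0 j0 q [::] n Vf)%:E)%E.
  transitivity (\int[P]_om (Vf (pathf c y w proj gamma1 b g0 X j0 n om))%:E)%E.
    apply: eq_integral => om _.
    rewrite !(Hsd_Hr hHfin) -EFinB /Vf; congr ((H _ - _)%:E).
    apply/funext => j; rewrite /gbar /gavg; congr (_ * _); apply: eq_bigr => k _.
    by rewrite -psgd_Gk // -ltnS.
  rewrite (integral_link w proj gamma1 b g0 j0 n hcm hX); congr (_%:E).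
  rewrite Ex_allp; apply: eq_big_seq => s; rewrite mem_allp => /eqP hs.
  rewrite cat0s mulrC; congr (_ * _).
  rewrite /Wp hs.
  have -> : iota 0 n = index_iota 0 n by rewrite /index_iota subn0.
  rewrite big_mkord; apply: eq_bigr => i _; rewrite Gk_take // hs; exact: ltnW.
rewrite hA lee_fin.
have hB := Ex_final proj gm g0 j0 gstar hq0 hq1 hsub n.
have hn0 : 0 < n%:R :> R by rewrite ltr0n.
have ht0 : 0 < Num.sqrt n%:R :> R by rewrite sqrtr_gt0.
case: (eqVneq D 0) => [D0|Dn0].
  have -> : Ex w proj gm g0 j0 q [::] n Vf = Ex w proj gm g0 j0 q [::] n (fun _ => 0).
    apply: Ex_ext => // t _.
    rewrite /Vf.
    have -> : gavg w proj gm g0 j0 n ([::] ++ t) = gstar; last by rewrite subrr.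
    apply/funext => i; rewrite /gavg.
    rewrite (eq_bigr (fun _ => gstar i)); last first.
      move=> k _; apply/eqP; rewrite -subr_eq0 -normr_eq0 eq_le normr_ge0 andbT.
      have := Diam_coord i (Gk_in w gm j0 hprojC hg0 ([::] ++ t) k) hgs.
      by rewrite -/D D0.
    rewrite sumr_const card_ord -[gstar i *+ n.+1]mulr_natr mulrCA mulVf ?mulr1 // pnatr_eq0.
  rewrite Ex_cst // -/D D0 mulr0 mul0r; exact: lexx.
have hD : 0 < D by rewrite lt0r Dn0 hD0.
have hg1p : 0 < gamma1 by rewrite /gamma1 divr_gt0 // mulr_gt0.
pose cc k := Num.sqrt (k%:R : R) / (2 * gamma1).
have hcc0 : forall k, 0 <= cc k.
  move=> k; rewrite /cc divr_ge0 ?sqrtr_ge0 //; lra.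
have hccm : forall k, cc k <= cc k.+1.
  move=> k; rewrite /cc ler_pM2r ?invr_gt0; last lra.
  by rewrite ler_sqrt ?ler0n // ler_nat.
have hgmk : forall k, gm k.+1 = gamma1 / Num.sqrt k.+1%:R.
  move=> k; exact: gammak_sqrt.
have hrec : forall k, hh w proj gm g0 j0 q H gstar k <=
    cc k.+1 * (aa w proj gm g0 j0 q gstar k - aa w proj gm g0 j0 q gstar k.+1) + gm k.+1.
  move=> k.
  have r := aa_rec g0 j0 hq0 hq1 hsub hcontr hgs hw0 hw1 hgam k.
  have hsq : 0 < Num.sqrt (k.+1%:R : R) by rewrite sqrtr_gt0 ltr0n.
  have e : 2 * gm k.+1 * cc k.+1 = 1.
    rewrite hgmk /cc; field.
    by rewrite gt_eqF // gt_eqF.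
  have m := ler_wpM2l (hcc0 k.+1) (_ : 2 * gm k.+1 * hh w proj gm g0 j0 q H gstar k <=
     aa w proj gm g0 j0 q gstar k - aa w proj gm g0 j0 q gstar k.+1 + 2 * gm k.+1 ^+ 2).
  have e1 : cc k.+1 * (2 * gm k.+1 * hh w proj gm g0 j0 q H gstar k) = hh w proj gm g0 j0 q H gstar k.
    by rewrite mulrA (mulrC (cc k.+1)) e mul1r.
  have e2 : cc k.+1 * (2 * gm k.+1 ^+ 2) = gm k.+1.
    by rewrite expr2 mulrA mulrA (mulrC (cc k.+1)) e mul1r.
  have m' := m ltac:(lra).
  rewrite e1 mulrDr e2 in m'.
  lra.
have hbnd := aa_bnd w gm j0 hq0 hq1 hprojC hg0 hgs hdiam.
have hsb := seq_bound hbnd hrec hcc0 hccm n.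
set r := Num.sqrt (n.+1%:R : R).
set t := Num.sqrt (n%:R : R).
set s2 := Num.sqrt (2 : R).
have hr0 : 0 < r by rewrite sqrtr_gt0 ltr0n.
have hr2 : r ^+ 2 = n.+1%:R by rewrite sqr_sqrtr // ler0n.
have htr : t <= r by rewrite ler_sqrt ?ler0n // ler_nat.
have hs22 : s2 ^+ 2 = 2 by rewrite sqr_sqrtr //; lra.
have hsum : \sum_(k < n.+1) gm k.+1 <= gamma1 * (2 * r).
  rewrite (eq_bigr (fun k : 'I_n.+1 => gamma1 * (Num.sqrt (k.+1%:R : R))^-1)); last first.
    by move=> k _; rewrite hgmk.
  rewrite -mulr_sumr; apply: ler_wpM2l => //; exact: sum_isqrt.
have haa := hbnd n.+1; move/andP: haa => [haa0 _].
have e_cc : cc n.+1 * D ^+ 2 = r * D * s2.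
  rewrite /cc /gamma1 -/C -/D -/r -/s2; field.
  by rewrite gt_eqF // gt_eqF.
have hgD : 2 * gamma1 <= D * s2.
  have -> : 2 * gamma1 = D / s2 by rewrite /gamma1 -/C -/D -/s2; field; rewrite gt_eqF.
  rewrite ler_pdivrMr // -mulrA -expr2 hs22; lra.
have hXb : cc n.+1 * (D ^+ 2 - aa w proj gm g0 j0 q gstar n.+1) + \sum_(k < n.+1) gm k.+1
    <= 2 * s2 * D * r.
  have h1 : cc n.+1 * (D ^+ 2 - aa w proj gm g0 j0 q gstar n.+1) <= cc n.+1 * D ^+ 2.
    by apply: ler_wpM2l => //; lra.
  have h2 : gamma1 * (2 * r) <= D * s2 * r.
    have := ler_wpM2r (ltW hr0) hgD; lra.
  lra.
apply: (le_trans hB).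
apply: (@le_trans _ _ ((n.+1%:R)^-1 * (2 * s2 * D * r))).
  apply: ler_wpM2l; first by rewrite invr_ge0 ler0n.
  exact: le_trans hsb hXb.
have -> : (n.+1%:R)^-1 * (2 * s2 * D * r) = 2 * s2 * D / r.
  rewrite -hr2; field; by rewrite gt_eqF.
apply: (@le_trans _ _ (2 * s2 * D / t)).
  apply: ler_wpM2l; first by apply: mulr_ge0 => //; apply: mulr_ge0 => //; exact: ltW.
  by rewrite lef_pV2 ?posrE.
rewrite ler_pM2r ?invr_gt0 //.
have : 0 < s2 * D by exact: mulr_gt0.
lra.
Qed.
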